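(* If $X$ and $Y$ are balanced words with $X\sim Y$, then $E(X)=E(Y)$.
   Context: $\mathcal{A}$ is the free associative $\mathbb{C}$-algebra on noncommuting generators $L,R$; words are finite products of these letters. A word is balanced if it contains equally many $L$'s and $R$'s. $\mathcal{J}$ is the two-sided ideal generated by $\{FG-GF : F,G \text{ nonempty balanced words}\}$ and $X\sim Y$ means $X-Y\in\mathcal{J}$. For a balanced word $W=a_1\cdots a_n$ and $0\le k\le n$, $e_k(W)=\sum_{i=1}^k\overline{a_i}$ with $\overline{R}=1$, $\overline{L}=-1$; the elevation multiset $E(W)$ is the multiset $\{e_0(W),e_1(W),\dots,e_n(W)\}$. *)

(* Defs.v *)
From mathcomp Require Import all_boot all_algebra complex Rstruct.
Set Implicit Arguments. Unset Strict Implicit. Unset Printing Implicit Defensive.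
Import GRing.Theory Num.Theory.

Definition CC : fieldType := (Rdefinitions.R)[i].

Definition letter := bool.
Definition Rl : letter := true.
Definition Ll : letter := false.
Definition word := seq letter.

Definition balanced (w : word) : bool := count (pred1 Rl) w == count (pred1 Ll) w.

(* Elements of the free associative algebra A = C<L,R>, represented as finite
   formal sums  sum_i c_i * w_i ; two representations denote the same element
   iff they have the same coefficient function. *)
Definition felem := seq (CC * word).
Definition coef (p : felem) (w : word) : CC := (\sum_(t <- p | t.2 == w) t.1)%R.
Definition fadd (p q : felem) : felem := p ++ q.
Definition fmul (p q : felem) : felem :=
  [seq ((a.1 * b.1)%R, a.2 ++ b.2) | a <- p, b <- q].
Definition fword (w : word) : felem := [:: (1%R, w)].
Definition fsub (p q : felem) : felem := p ++ [seq ((- t.1)%R, t.2) | t <- q].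

(* J : the two-sided ideal generated by { FG - GF : F,G nonempty balanced words }:
   the smallest subset containing the generators, 0, closed under addition and
   under left/right multiplication by arbitrary elements of A, and respecting
   equality of elements of A. *)
Inductive inJ : felem -> Prop :=
  | inJ_gen (F G : word) : F != [::] -> G != [::] -> balanced F -> balanced G ->
      inJ (fsub (fword (F ++ G)) (fword (G ++ F)))
  | inJ_zero : inJ [::]
  | inJ_add p q : inJ p -> inJ q -> inJ (fadd p q)
  | inJ_lmul a p : inJ p -> inJ (fmul a p)
  | inJ_rmul p a : inJ p -> inJ (fmul p a)
  | inJ_ext p q : (forall w, coef p w = coef q w) -> inJ p -> inJ q.

Definition simJ (X Y : felem) : Prop := inJ (fsub X Y).

Definition lbar (a : letter) : int := if a then 1%R else (-1)%R.
Definition elev (W : word) (k : nat) : int := (\sum_(a <- take k W) lbar a)%R.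
(* The elevation multiset {e_0(W), ..., e_n(W)}, as a sequence up to permutation. *)
Definition E (W : word) : seq int := [seq elev W k | k <- iota 0 (size W).+1].

(* Main.v *)
Require Import Defs.
From mathcomp Require Import all_boot all_algebra complex Rstruct.
From mathcomp Require Import zify ring.
Import GRing.Theory Num.Theory.
Open Scope ring_scope.

Definition ssum (w : word) : int := \sum_(a <- w) lbar a.

Lemma E_cat u v : E (u ++ v) = E u ++ map (fun x => ssum u + x) (behead (E v)).
Proof.
rewrite /E size_cat -addSn iotaD map_cat; congr (_ ++ _).
  apply/eq_in_map => k; rewrite mem_iota add0n => /andP[_ Hk].
  by rewrite /elev takel_cat.
rewrite add0n /= -map_comp -[(size u).+1]addn1 iotaDl -map_comp.
apply: eq_map => j /=.
rewrite /elev take_cat ltnNge leq_addr /= addKn big_cat.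
by [].
Qed.

Lemma ssum_cat u v : ssum (u ++ v) = ssum u + ssum v.
Proof. by rewrite /ssum big_cat. Qed.

Lemma ssum_bal w : balanced w -> ssum w = 0.
Proof.
rewrite /balanced => /eqP H.
have -> : ssum w = (count (pred1 Rl) w)%:Z - (count (pred1 Ll) w)%:Z.
  elim: w {H} => [|a w IH]; first by rewrite /ssum big_nil.
  rewrite /ssum big_cons -/(ssum w) IH /=.
  case: a => /=; rewrite /lbar !PoszD; lia.
by rewrite H subrr.
Qed.

Lemma bE_cat u v : behead (E (u ++ v)) = behead (E u) ++ map (fun x => ssum u + x) (behead (E v)).
Proof. by rewrite E_cat /E /=. Qed.

Lemma E_swap U V F G : balanced F -> balanced G ->
  perm_eq (E (U ++ F ++ G ++ V)) (E (U ++ G ++ F ++ V)).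
Proof.
move=> bF bG.
rewrite !(E_cat U) perm_cat2l; apply: perm_map.
rewrite !catA !bE_cat !ssum_cat (ssum_bal _ bF) (ssum_bal _ bG) perm_cat2r.
rewrite (eq_map (f := fun x => 0 + x) (g := id) (@add0r _)) map_id.
rewrite (eq_map (f := fun x => 0 + x) (g := id) (@add0r _)) map_id.
by rewrite perm_catC.
Qed.

Definition phi (P : pred word) (p : felem) : CC :=
  \sum_(t <- p) (if P t.2 then t.1 else 0).
Definition Inv (P : pred word) := forall U V F G, balanced F -> balanced G ->
  P (U ++ F ++ G ++ V) = P (U ++ G ++ F ++ V).

Lemma phi_coef P p s : uniq s -> {subset map snd p <= s} ->
  phi P p = \sum_(w <- s | P w) coef p w.
Proof.
move=> us; elim: p => [|x p IH] sub.
  by rewrite /phi big_nil big1 // => w _; rewrite /coef big_nil.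
have xs : x.2 \in s by apply: sub; rewrite inE eqxx.
rewrite /phi big_cons -/(phi P p) IH; last by move=> w hw; apply: sub; rewrite inE hw orbT.
have -> : \sum_(w <- s | P w) coef (x :: p) w =
   \sum_(w <- s | P w) ((if x.2 == w then x.1 else 0) + coef p w).
  apply: eq_bigr => w _; rewrite /coef big_cons; case: ifP => _ //; by rewrite add0r.
rewrite big_split /=; congr (_ + _).
rewrite big_mkcond (bigD1_seq x.2) //= eqxx big1 ?addr0 //.
move=> w /negbTE; rewrite eq_sym => ->; by case: (P w).
Qed.

Lemma phi_ext P p q : (forall w, coef p w = coef q w) -> phi P p = phi P q.
Proof.
move=> H.
have s1 : {subset map snd p <= undup (map snd (p ++ q))}.
  by move=> w; rewrite mem_undup map_cat mem_cat => ->.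
have s2 : {subset map snd q <= undup (map snd (p ++ q))}.
  by move=> w; rewrite mem_undup map_cat mem_cat => ->; rewrite orbT.
rewrite (phi_coef P _ _ (undup_uniq _) s1) (phi_coef P _ _ (undup_uniq _) s2).
by apply: eq_bigr => w _; rewrite H.
Qed.

Lemma phi_cat P p q : phi P (p ++ q) = phi P p + phi P q.
Proof. by rewrite /phi big_cat. Qed.

Lemma phi_lmul P a p : phi P (fmul a p) = \sum_(x <- a) x.1 * phi (fun w => P (x.2 ++ w)) p.
Proof.
elim: a => [|x a IH]; first by rewrite /phi /fmul /= !big_nil.
rewrite /fmul allpairs_cons -/(fmul a p) phi_cat IH big_cons; congr (_ + _).
rewrite /phi big_map mulr_sumr; apply: eq_bigr => y _ /=.
by case: ifP; rewrite ?mulr0.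
Qed.

Lemma phi_rmul P p a : phi P (fmul p a) = \sum_(y <- a) y.1 * phi (fun w => P (w ++ y.2)) p.
Proof.
have -> : phi P (fmul p a) = \sum_(x <- p) \sum_(y <- a) (if P (x.2 ++ y.2) then x.1 * y.1 else 0).
  elim: p => [|x p IH]; first by rewrite /phi /fmul /= !big_nil.
  rewrite /fmul allpairs_cons -/(fmul p a) phi_cat IH big_cons; congr (_ + _).
  by rewrite /phi big_map.
rewrite exchange_big /=; apply: eq_bigr => y _.
rewrite /phi mulr_sumr; apply: eq_bigr => x _.
by case: ifP; rewrite ?mulr0 // mulrC.
Qed.

Lemma Inv_pre P u : Inv P -> Inv (fun w => P (u ++ w)).
Proof. by move=> H U V F G bF bG /=; rewrite !(catA u U) H. Qed.

Lemma Inv_suf P u : Inv P -> Inv (fun w => P (w ++ u)).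
Proof. by move=> H U V F G bF bG /=; rewrite -!catA H. Qed.

Lemma phi_J p : inJ p -> forall P, Inv P -> phi P p = 0.
Proof.
elim=> {p}.
- move=> F G _ _ bF bG P HP.
  rewrite /fsub phi_cat /phi /fword /= !big_cons !big_nil /=.
  have := HP [::] [::] F G bF bG; rewrite /= !cats0 => ->.
  by case: ifP; rewrite ?addr0 // addrN.
- by move=> P _; rewrite /phi big_nil.
- by move=> p q _ Hp _ Hq P HP; rewrite /fadd phi_cat Hp // Hq // addr0.
- move=> a p _ Hp P HP; rewrite phi_lmul big1 // => x _.
  by rewrite Hp ?mulr0 //; apply: Inv_pre.
- move=> p a _ Hp P HP; rewrite phi_rmul big1 // => x _.
  by rewrite Hp ?mulr0 //; apply: Inv_suf.
- move=> p q Hc _ Hp P HP; by rewrite -(phi_ext P _ _ Hc) Hp.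
Qed.

Theorem lemma4p4 (X Y : word) :
  balanced X -> balanced Y -> simJ (fword X) (fword Y) -> perm_eq (E X) (E Y).
Proof.
move=> _ _ H.
pose P := fun w => perm_eq (E w) (E X).
have HP : Inv P.
  by move=> U V F G bF bG; rewrite /P; apply: (permPl (E_swap U V F G bF bG)).
have := phi_J _ H P HP.
rewrite /fsub phi_cat /phi /fword /= !big_cons !big_nil /P /= perm_refl.
case: ifP => [PY _|_]; first by rewrite perm_sym.
rewrite !addr0 => h; exfalso; move: (@oner_neq0 CC); by rewrite h eqxx.
Qed.
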